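(* There exists a family of nonnegative constants $(m^\epsilon(j))_{\epsilon>0,\,j\in\mathbb{N}}$ such that: (1) for all sufficiently small $\epsilon>0$ and every $j\in\mathbb{N}$, one has $\tau_i^\epsilon(x)<m^\epsilon(j)$ for every $i\in\{0,1\}$ and every $x\in V_{1-i}^\epsilon(j)$; (2) $\lim_{\epsilon\downarrow0}\sum_{j=1}^\infty j\,e^{\nu j}m^\epsilon(j)=0$ for every $\nu\in[0,\alpha)$.
   Context: Fix $\alpha>\beta>0$. For $i\in\{0,1\}$ let $\Phi_i^t(x)=(i+(x_1-i)e^{-\alpha t},i+(x_2-i)e^{-\beta t})$ and $\Psi_i^t=\Phi_i^{-t}$. Let $\Gamma=\{(x_1,x_2):0\le x_2\le1,\ x_2^{\alpha/\beta}\le x_1\le1-(1-x_2)^{\alpha/\beta}\}$, $\Gamma^\circ$ its interior, and $D(x)=\alpha\beta(x_1-x_2)$. For $\epsilon>0$, $i\in\{0,1\}$ and $x\in\Gamma^\circ$ with $|D(x)|<\epsilon$, let $\tau_i^\epsilon(x)=\min\big(\sup\{t\ge0:|D(\Psi_i^tx)|<\epsilon\},\ \sup\{t\ge0:\Psi_i^t(x)\in\Gamma^\circ\}\big)$. For integers $j\ge2$ let $V_i^\epsilon(j)=\{x\in\Gamma^\circ:|D(x)|<\epsilon,\ \tau_i^\epsilon(x)\in(j-1,j]\}$, and let $V_i^\epsilon(1)=\{x\in\Gamma^\circ:|D(x)|<\epsilon,\ \tau_i^\epsilon(x)\in(\epsilon^{\beta/\alpha},1]\}$. Here $\mathbb{N}=\{1,2,\dots\}$.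 *)

(* Defs.v *)
From Stdlib Require Import Reals.
From Coquelicot Require Import Coquelicot.
Open Scope R_scope.

(* Real power y^a for y >= 0 and a > 0, with the convention 0^a = 0
   (Stdlib's Rpower 0 a would be 1, which is wrong here). *)
Definition pw (y a : R) : R := if Rlt_dec 0 y then Rpower y a else 0.

(* i in {0,1} is encoded as a boolean; iR false = 0, iR true = 1. *)
Definition iR (i : bool) : R := if i then 1 else 0.

Definition Phi (alpha beta : R) (i : bool) (t : R) (x : R * R) : R * R :=
  (iR i + (fst x - iR i) * exp (- alpha * t),
   iR i + (snd x - iR i) * exp (- beta * t)).

Definition Psi (alpha beta : R) (i : bool) (t : R) (x : R * R) : R * R :=
  Phi alpha beta i (- t) x.

Definition Gamma (alpha beta : R) (x : R * R) : Prop :=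
  0 <= snd x <= 1 /\
  pw (snd x) (alpha / beta) <= fst x <= 1 - pw (1 - snd x) (alpha / beta).

Definition GammaInt (alpha beta : R) (x : R * R) : Prop :=
  exists r : R, 0 < r /\
    forall y : R * R, Rabs (fst y - fst x) < r -> Rabs (snd y - snd x) < r ->
      Gamma alpha beta y.

Definition D (alpha beta : R) (x : R * R) : R := alpha * beta * (fst x - snd x).

Definition tau (alpha beta eps : R) (i : bool) (x : R * R) : Rbar :=
  Rbar_min
    (Lub_Rbar (fun t => 0 <= t /\ Rabs (D alpha beta (Psi alpha beta i t x)) < eps))
    (Lub_Rbar (fun t => 0 <= t /\ GammaInt alpha beta (Psi alpha beta i t x))).

Definition V (alpha beta eps : R) (i : bool) (j : nat) (x : R * R) : Prop :=
  GammaInt alpha beta x /\ Rabs (D alpha beta x) < eps /\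
  (if (j <=? 1)%nat
   then Rbar_lt (Finite (Rpower eps (beta / alpha))) (tau alpha beta eps i x)
   else Rbar_lt (Finite (INR j - 1)) (tau alpha beta eps i x)) /\
  Rbar_le (tau alpha beta eps i x) (Finite (INR j)).

(* Main.v *)
Require Import Defs.
From Stdlib Require Import Reals Lra Psatz Classical.
From Coquelicot Require Import Coquelicot.
Open Scope R_scope.

Lemma exp_mono (x y : R) : x <= y -> exp x <= exp y.
Proof. intros [H|H]. left; apply exp_increasing; auto. subst; lra. Qed.

Lemma lub_gt (E : R -> Prop) (L : R) :
  Rbar_lt (Finite L) (Lub_Rbar E) -> exists t, E t /\ L < t.
Proof.
  intros H. destruct (Lub_Rbar_correct E) as [Hub Hl].
  apply NNPP; intro Hn.
  assert (Hle : Rbar_le (Lub_Rbar E) (Finite L)).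
  { apply Hl. intros t Et. simpl. destruct (Rle_dec t L) as [h|h]; auto.
    exfalso; apply Hn; exists t; split; auto; lra. }
  exact (Rbar_lt_not_le _ _ H Hle).
Qed.

Lemma lub_le (E : R -> Prop) (B : R) :
  (forall t, E t -> t <= B) -> Rbar_le (Lub_Rbar E) (Finite B).
Proof.
  intros H. destruct (Lub_Rbar_correct E) as [Hub Hl]. apply Hl.
  intros t Et. simpl. auto.
Qed.

Lemma min_gt (X Y : Rbar) (L : R) :
  Rbar_lt (Finite L) (Rbar_min X Y) -> Rbar_lt (Finite L) X /\ Rbar_lt (Finite L) Y.
Proof.
  intros H; split; eapply Rbar_lt_le_trans; eauto.
  apply Rbar_min_l. apply Rbar_min_r.
Qed.

Lemma pw_nonneg (y a : R) : 0 <= pw y a.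
Proof. unfold pw. destruct (Rlt_dec 0 y). left; apply exp_pos. lra. Qed.

Lemma GammaInt_fst (alpha beta : R) (p : R * R) : GammaInt alpha beta p -> 0 <= fst p <= 1.
Proof.
  intros [r [Hr H]]. destruct (H p) as [_ [H1 H2]].
  rewrite Rminus_eq_0, Rabs_R0; auto. rewrite Rminus_eq_0, Rabs_R0; auto.
  pose proof (pw_nonneg (snd p) (alpha/beta)). pose proof (pw_nonneg (1 - snd p) (alpha/beta)).
  lra.
Qed.

Lemma Psi_fst (alpha beta : R) (i : bool) (t : R) (x : R * R) :
  fst (Psi alpha beta i t x) = iR i + (fst x - iR i) * exp (alpha * t).
Proof. unfold Psi, Phi; simpl. replace (- alpha * - t) with (alpha * t) by ring. reflexivity. Qed.

Lemma D_Psi (alpha beta : R) (i : bool) (t : R) (x : R * R) :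
  Defs.D alpha beta (Psi alpha beta i t x) =
  alpha * beta * ((fst x - iR i) * exp (alpha * t) - (snd x - iR i) * exp (beta * t)).
Proof.
  unfold Defs.D, Psi, Phi; simpl.
  replace (- alpha * - t) with (alpha * t) by ring.
  replace (- beta * - t) with (beta * t) by ring. ring.
Qed.

Lemma exp_INR_mul (c : R) (n : nat) : exp (c * INR n) = exp c ^ n.
Proof.
  induction n. simpl. rewrite Rmult_0_r, exp_0; auto.
  rewrite S_INR, Rmult_plus_distr_l, Rmult_1_r, exp_plus, IHn. simpl. ring.
Qed.
Definition Lw (alpha beta eps : R) : R :=
  ln (2 / (alpha * beta * (alpha - beta))) + (1 - beta / alpha) * ln eps.

Lemma a_bound (alpha beta eps : R) (j : nat) (k : bool) (x : R * R) :
  0 < beta -> beta < alpha -> 0 < eps <= 1 -> (1 <= j)%nat ->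
  V alpha beta eps k j x ->
  Rabs (fst x - iR k) <= Rmin (exp (Lw alpha beta eps)) (exp (- alpha * (INR j - 1))).
Proof.
  intros Hb Hab He Hj [Gx [Dx [Hlow Hup]]].
  set (T := Rpower eps (beta / alpha)).
  assert (HT0 : 0 < T) by (unfold T, Rpower; apply exp_pos).
  assert (HT1 : T <= 1).
  { unfold T, Rpower. rewrite <- exp_0. apply exp_mono.
    assert (ln eps <= 0) by (rewrite <- ln_1; destruct (proj2 He) as [h|h];
      [left; apply ln_increasing; lra | subst; lra]).
    assert (0 < beta / alpha) by (apply Rdiv_lt_0_compat; lra). nra. }
  assert (HL : exists L, T <= L /\ INR j - 1 <= L /\
     Rbar_lt (Finite L) (tau alpha beta eps k x)).
  { destruct (Nat.leb j 1) eqn:Ej.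
    - apply Nat.leb_le in Ej. assert (j = 1%nat) by lia. subst j.
      exists T. simpl. split; [lra|split; [lra|exact Hlow]].
    - apply Nat.leb_gt in Ej. exists (INR j - 1).
      assert (2 <= INR j) by (replace 2 with (INR 2) by (simpl; lra); apply le_INR; lia).
      split; [lra|split; [lra|exact Hlow]]. }
  destruct HL as [L [HTL [HjL HL]]].
  unfold tau in HL. apply min_gt in HL. destruct HL as [HLD HLG].
  apply lub_gt in HLD. destruct HLD as [tD [[HtD0 HtD] HtDL]].
  apply lub_gt in HLG. destruct HLG as [tG [[HtG0 HtG] HtGL]].
  set (s1 := fst x - iR k). set (s2 := snd x - iR k).
  apply Rmin_glb.
  -
    rewrite D_Psi in HtD. fold s1 s2 in HtD.
    unfold Defs.D in Dx.
    assert (Hab0 : 0 < alpha * beta) by nra.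
    set (e' := eps / (alpha * beta)).
    assert (H1 : Rabs (s1 * exp (alpha * tD) - s2 * exp (beta * tD)) < e').
    { unfold e'. apply (Rmult_lt_reg_l (alpha*beta)); auto.
      rewrite <- (Rabs_pos_eq (alpha*beta)) at 1 by lra. rewrite <- Rabs_mult.
      field_simplify; lra. }
    assert (H2 : Rabs (s2 - s1) < e').
    { unfold e'. apply (Rmult_lt_reg_l (alpha*beta)); auto.
      rewrite <- (Rabs_pos_eq (alpha*beta)) at 1 by lra. rewrite <- Rabs_mult.
      unfold s1, s2.
      replace (alpha * beta * (snd x - iR k - (fst x - iR k))) with (- (alpha * beta * (fst x - snd x))) by ring.
      rewrite Rabs_Ropp.
      field_simplify; lra. }
    set (E2 := exp (beta * tD)).
    set (F := exp ((alpha - beta) * tD)).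
    assert (HE1 : exp (alpha * tD) = E2 * F).
    { unfold E2, F. rewrite <- exp_plus. f_equal. ring. }
    assert (HE2 : 1 <= E2).
    { unfold E2. rewrite <- exp_0. apply exp_mono. nra. }
    assert (HF : 1 + (alpha - beta) * tD <= F) by apply exp_ineq1_le.
    assert (Htri : Rabs s1 * (E2 * F - E2) <= Rabs (s1 * (E2*F) - s2 * E2) + Rabs (s2 - s1) * E2).
    { replace (Rabs s1 * (E2 * F - E2)) with (Rabs (s1 * (E2 * F - E2))).
      2:{ rewrite Rabs_mult. assert (1 <= F) by nra. rewrite (Rabs_pos_eq (E2 * F - E2)); [reflexivity|nra]. }
      replace (s1 * (E2 * F - E2)) with ((s1 * (E2*F) - s2 * E2) + (s2 - s1) * E2) by ring.
      eapply Rle_trans; [apply Rabs_triang|]. rewrite Rabs_mult, (Rabs_pos_eq E2) by lra. lra. }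
    rewrite HE1 in H1. fold E2 in H1.
    assert (Ha0 : 0 <= Rabs s1) by apply Rabs_pos.
    assert (Hkey : Rabs s1 * (alpha - beta) * tD < 2 * e').
    { assert (Rabs s1 * (E2 * F - E2) < e' * (1 + E2)).
      { pose proof (Rabs_pos (s2 - s1)). nra. }
      assert (Rabs s1 * E2 * ((alpha - beta) * tD) <= Rabs s1 * (E2 * F - E2)).
      { assert (0 <= Rabs s1 * E2) by nra. nra. }
      assert (E2 * (Rabs s1 * (alpha - beta) * tD) < E2 * (2 * e')).
      { assert (0 < e') by (unfold e'; apply Rdiv_lt_0_compat; lra). nra. }
      apply Rmult_lt_reg_l in H3; lra. }
    assert (Hkey2 : Rabs s1 * ((alpha - beta) * T) < 2 * e').
    { assert (0 <= Rabs s1 * (alpha - beta)) by nra. nra. }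
    assert (Hc : 0 < 2 / (alpha * beta * (alpha - beta))).
    { apply Rdiv_lt_0_compat; [lra|]. apply Rmult_lt_0_compat; lra. }
    assert (HLw : exp (Lw alpha beta eps) = 2 / (alpha * beta * (alpha - beta)) * eps / T).
    { unfold Lw, T, Rpower. rewrite exp_plus. rewrite (exp_ln _ Hc).
      replace ((1 - beta / alpha) * ln eps) with (ln eps + - (beta / alpha * ln eps)) by ring.
      rewrite exp_plus, exp_Ropp. rewrite (exp_ln eps) by lra. field.
      repeat split; try (apply Rgt_not_eq, exp_pos); lra. }
    rewrite HLw. left.
    apply (Rmult_lt_reg_r ((alpha - beta) * T)). nra.
    unfold e' in Hkey2. replace (2 / (alpha * beta * (alpha - beta)) * eps / T * ((alpha - beta) * T))
      with (2 * (eps / (alpha * beta))). lra. field. lra.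
  -
    apply GammaInt_fst in HtG. rewrite Psi_fst in HtG. fold s1 in HtG.
    assert (HE : 0 < exp (alpha * tG)) by apply exp_pos.
    assert (Hs : Rabs s1 * exp (alpha * tG) <= 1).
    { destruct k; simpl in HtG; unfold Rabs; destruct (Rcase_abs s1); nra. }
    apply Rle_trans with (exp (- alpha * tG)).
    + rewrite Ropp_mult_distr_l_reverse, exp_Ropp.
      apply (Rmult_le_reg_r (exp (alpha * tG))); auto.
      rewrite Rinv_l; lra.
    + apply exp_mono. nra.
Qed.

Lemma tau_bound (alpha beta eps : R) (i : bool) (x : R * R) (u : R) :
  0 < beta -> beta < alpha -> GammaInt alpha beta x ->
  Rabs (fst x - iR (negb i)) <= u -> 0 < u <= 1/2 ->
  Rbar_lt (tau alpha beta eps i x) (Finite (3 / alpha * u)).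
Proof.
  intros Hb Hab Gx Ha Hu.
  apply GammaInt_fst in Gx.
  unfold tau. eapply Rbar_le_lt_trans; [apply Rbar_min_r|].
  eapply Rbar_le_lt_trans; [apply (lub_le _ (2 / alpha * u))|].
  - intros t [Ht0 Hg]. apply GammaInt_fst in Hg. rewrite Psi_fst in Hg.
    set (a := Rabs (fst x - iR (negb i))) in *.
    assert (HE : 1 + alpha * t <= exp (alpha * t)) by apply exp_ineq1_le.
    assert (H1 : (1 - a) * exp (alpha * t) <= 1).
    { unfold a; destruct i; simpl in *; unfold Rabs; destruct Rcase_abs; nra. }
    assert (Ha0 : 0 <= a) by apply Rabs_pos.
    assert (alpha * t <= 2 * u) by nra.
    apply (Rmult_le_reg_l alpha); [lra|]. replace (alpha * (2 / alpha * u)) with (2 * u) by (field; lra). lra.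
  - simpl. apply (Rmult_lt_reg_l alpha); [lra|].
    replace (alpha * (2 / alpha * u)) with (2 * u) by (field; lra).
    replace (alpha * (3 / alpha * u)) with (3 * u) by (field; lra). lra.
Qed.

Lemma term_bound (alpha nu theta kappa Lwv : R) (n : nat) :
  0 < alpha -> 0 < kappa <= 1 -> 0 <= theta <= 1 ->
  0 <= INR (S n) * exp (nu * INR (S n)) * (3 / alpha * Rmin (exp Lwv) (exp (- alpha * (INR (S n) - 1))))
  <= (3 / (alpha * kappa) * exp nu * exp (theta * Lwv)) * exp (kappa + nu - alpha * (1 - theta)) ^ n.
Proof.
  intros Ha Hk Ht.
  rewrite <- exp_INR_mul.
  replace (INR (S n) - 1) with (INR n) by (rewrite S_INR; ring).
  assert (Hn : 0 <= INR n) by apply pos_INR.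
  assert (Hm0 : 0 < Rmin (exp Lwv) (exp (- alpha * INR n))).
  { unfold Rmin; destruct Rle_dec; apply exp_pos. }
  assert (Hm : Rmin (exp Lwv) (exp (- alpha * INR n)) <= exp (theta * Lwv + (1 - theta) * (- alpha * INR n))).
  { unfold Rmin; destruct Rle_dec as [h|h].
    - apply exp_mono. assert (Lwv <= - alpha * INR n).
      { destruct (Rle_dec Lwv (- alpha * INR n)) as [h'|h']; auto.
        exfalso. assert (exp (- alpha * INR n) < exp Lwv) by (apply exp_increasing; lra). lra. }
      nra.
    - apply exp_mono. assert (- alpha * INR n <= Lwv).
      { destruct (Rle_dec (- alpha * INR n) Lwv) as [h'|h']; auto.
        exfalso. apply h. left. apply exp_increasing; lra. }
      nra. }
  assert (HS : INR (S n) <= exp (kappa * INR n) / kappa).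
  { rewrite S_INR. pose proof (exp_ineq1_le (kappa * INR n)).
    apply (Rmult_le_reg_l kappa); [lra|]. replace (kappa * (exp (kappa * INR n) / kappa)) with (exp (kappa * INR n)) by (field; lra).
    nra. }
  assert (HSp : 0 < INR (S n)) by (apply lt_0_INR; lia).
  assert (Hen : exp (nu * INR (S n)) = exp nu * exp (nu * INR n)).
  { rewrite <- exp_plus. f_equal. rewrite S_INR. ring. }
  assert (Hrhs : 3 / (alpha * kappa) * exp nu * exp (theta * Lwv) * exp ((kappa + nu - alpha * (1 - theta)) * INR n)
     = (exp (kappa * INR n) / kappa) * (exp nu * exp (nu * INR n)) * (3 / alpha * exp (theta * Lwv + (1 - theta) * (- alpha * INR n)))).
  { rewrite !exp_plus.
    replace ((kappa + nu - alpha * (1 - theta)) * INR n) with (kappa * INR n + (nu * INR n + (1 - theta) * (- alpha * INR n))) by ring.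
    rewrite !exp_plus. field. lra. }
  rewrite Hrhs, Hen. split.
  - pose proof (exp_pos (nu * INR (S n))). rewrite Hen in H.
    apply Rmult_le_pos; [apply Rmult_le_pos; lra|]. apply Rmult_le_pos; [|lra].
    left; apply Rdiv_lt_0_compat; lra.
  - assert (0 < exp nu * exp (nu * INR n)) by (apply Rmult_lt_0_compat; apply exp_pos).
    assert (0 < 3 / alpha) by (apply Rdiv_lt_0_compat; lra).
    apply Rmult_le_compat.
    + apply Rmult_le_pos; lra.
    + left; apply Rmult_lt_0_compat; lra.
    + apply Rmult_le_compat_r; lra.
    + apply Rmult_le_compat_l; lra.
Qed.

Theorem lemma7p10 (alpha beta : R) (Hb : 0 < beta) (Hab : beta < alpha) :
  exists m : R -> nat -> R,
    (forall eps j, 0 < eps -> (1 <= j)%nat -> 0 <= m eps j) /\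
    (exists eps0 : R, 0 < eps0 /\
       forall eps, 0 < eps < eps0 ->
       forall (j : nat), (1 <= j)%nat ->
       forall (i : bool) (x : R * R),
         V alpha beta eps (negb i) j x ->
         Rbar_lt (tau alpha beta eps i x) (Finite (m eps j))) /\
    (forall nu : R, 0 <= nu < alpha ->
       forall delta : R, 0 < delta ->
       exists eta : R, 0 < eta /\
         forall eps, 0 < eps < eta ->
           exists s : R,
             is_series (fun n : nat => INR (S n) * exp (nu * INR (S n)) * m eps (S n)) s
             /\ Rabs s < delta).
Proof.
  exists (fun eps j => 3 / alpha * Rmin (exp (Lw alpha beta eps)) (exp (- alpha * (INR j - 1)))).
  set (c := 2 / (alpha * beta * (alpha - beta))).
  set (gam := 1 - beta / alpha).
  assert (Hgam : 0 < gam).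
  { unfold gam. assert (beta / alpha < 1). { apply (Rmult_lt_reg_l alpha); [lra|].
      replace (alpha * (beta / alpha)) with beta by (field; lra). lra. } lra. }
  assert (HLw : forall eps, Lw alpha beta eps = ln c + gam * ln eps) by reflexivity.
  split; [|split].
  - intros eps j _ _. apply Rmult_le_pos.
    left; apply Rdiv_lt_0_compat; lra.
    unfold Rmin; destruct Rle_dec; left; apply exp_pos.
  - exists (Rmin 1 (exp ((ln (1/2) - ln c) / gam))). split.
    { apply Rmin_pos; [lra|apply exp_pos]. }
    intros eps Heps j Hj i x HV.
    assert (He1 : eps <= 1).
    { pose proof (Rmin_l 1 (exp ((ln (1/2) - ln c) / gam))). lra. }
    assert (He2 : eps < exp ((ln (1/2) - ln c) / gam)).
    { pose proof (Rmin_r 1 (exp ((ln (1/2) - ln c) / gam))). lra. }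
    assert (Hln : ln eps < (ln (1/2) - ln c) / gam).
    { rewrite <- (ln_exp ((ln (1/2) - ln c) / gam)). apply ln_increasing; lra. }
    assert (HLw2 : exp (Lw alpha beta eps) < 1/2).
    { rewrite <- (exp_ln (1/2)) by lra. apply exp_increasing. rewrite HLw.
      assert (gam * ln eps < ln (1/2) - ln c).
      { apply (Rmult_lt_compat_l gam) in Hln; auto.
        replace (gam * ((ln (1 / 2) - ln c) / gam)) with (ln (1/2) - ln c) in Hln by (field; lra). lra. }
      lra. }
    pose proof (a_bound alpha beta eps j (negb i) x Hb Hab (conj (proj1 Heps) He1) Hj HV) as Ha.
    apply tau_bound; auto.
    + destruct HV; auto.
    + split. unfold Rmin; destruct Rle_dec; apply exp_pos.
      pose proof (Rmin_l (exp (Lw alpha beta eps)) (exp (- alpha * (INR j - 1)))). lra.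
  - intros nu Hnu delta Hd.
    set (theta := (alpha - nu) / (4 * alpha)).
    set (kappa := Rmin 1 ((alpha - nu) / 4)).
    assert (Hth : 0 <= theta <= 1).
    { unfold theta. split. left; apply Rdiv_lt_0_compat; lra.
      apply (Rmult_le_reg_l (4 * alpha)); [lra|].
      replace (4 * alpha * ((alpha - nu) / (4 * alpha))) with (alpha - nu) by (field; lra). lra. }
    assert (Hth0 : 0 < theta) by (unfold theta; apply Rdiv_lt_0_compat; lra).
    assert (Hk : 0 < kappa <= 1).
    { unfold kappa. split. apply Rmin_pos; lra. apply Rmin_l. }
    assert (Hk2 : kappa <= (alpha - nu) / 4) by apply Rmin_r.
    set (r := kappa + nu - alpha * (1 - theta)).
    assert (Hr : r < 0).
    { unfold r. replace (alpha * (1 - theta)) with (alpha - (alpha - nu) / 4).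
      lra. unfold theta. field. lra. }
    set (q := exp r).
    assert (Hq : 0 < q < 1).
    { unfold q. split. apply exp_pos. rewrite <- exp_0. apply exp_increasing. lra. }
    set (K := 3 / (alpha * kappa) * exp nu).
    assert (HK : 0 < K).
    { unfold K. apply Rmult_lt_0_compat; [|apply exp_pos]. apply Rdiv_lt_0_compat; [lra|]. nra. }
    set (B := delta * (1 - q) / K).
    assert (HB : 0 < B).
    { unfold B. apply Rdiv_lt_0_compat; auto. nra. }
    exists (exp ((ln B / theta - ln c) / gam)). split; [apply exp_pos|].
    intros eps Heps.
    set (f := fun n : nat => INR (S n) * exp (nu * INR (S n)) *
        (3 / alpha * Rmin (exp (Lw alpha beta eps)) (exp (- alpha * (INR (S n) - 1))))).
    set (C := K * exp (theta * Lw alpha beta eps)).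
    assert (Hf : forall n, 0 <= f n <= C * q ^ n).
    { intro n. unfold f, C, K, q, r. apply term_bound; lra. }
    assert (Hgeo : is_series (fun n => C * q ^ n) (C * / (1 - q))).
    { assert (Hq1 : Rabs q < 1) by (rewrite Rabs_pos_eq; lra).
      apply (is_series_scal_l C _ _ (is_series_geom q Hq1)). }
    assert (Hex : ex_series f).
    { apply (ex_series_le f (fun n => C * q ^ n)).
      intro n. change (norm (f n)) with (Rabs (f n)). rewrite Rabs_pos_eq; apply Hf.
      exists (C * / (1 - q)). exact Hgeo. }
    exists (Series f). split.
    { apply Series_correct. exact Hex. }
    assert (HS : Series f <= C * / (1 - q)).
    { rewrite <- (is_series_unique _ _ Hgeo). apply Series_le; auto.
      exists (C * / (1 - q)). exact Hgeo. }
    assert (HS0 : 0 <= Series f).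
    { replace 0 with (Series (fun n => 0 * f n)) by (rewrite Series_scal_l; ring).
      apply Series_le; [|exact Hex].
      intro n; pose proof (Hf n); split; lra. }
    rewrite Rabs_pos_eq by lra.
    assert (Hlne : ln eps < (ln B / theta - ln c) / gam).
    { rewrite <- (ln_exp ((ln B / theta - ln c) / gam)). apply ln_increasing; lra. }
    assert (HC : exp (theta * Lw alpha beta eps) < B).
    { rewrite <- (exp_ln B) by lra. apply exp_increasing. rewrite HLw.
      apply (Rmult_lt_compat_l gam) in Hlne; auto.
      replace (gam * ((ln B / theta - ln c) / gam)) with (ln B / theta - ln c) in Hlne by (field; lra).
      apply (Rmult_lt_reg_l (/ theta)). apply Rinv_0_lt_compat; lra.
      replace (/ theta * (theta * (ln c + gam * ln eps))) with (ln c + gam * ln eps) by (field; lra).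
      replace (/ theta * ln B) with (ln B / theta) by (unfold Rdiv; ring). lra. }
    apply Rle_lt_trans with (C * / (1 - q)); auto.
    unfold C. apply (Rmult_lt_reg_r (1 - q)); [lra|].
    replace (K * exp (theta * Lw alpha beta eps) * / (1 - q) * (1 - q)) with (K * exp (theta * Lw alpha beta eps)) by (field; lra).
    unfold B in HC. apply (Rmult_lt_compat_l K) in HC; auto.
    replace (K * (delta * (1 - q) / K)) with (delta * (1 - q)) in HC by (field; lra). lra.
Qed.
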